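(* Let $(\mathcal{X},\|\cdot\|)$ be a real Banach space, $\mathcal{E}$ a measurable space, $Q,P_e:\mathcal{X}\to\mathcal{X}$ with $\|Q(\theta_1)-Q(\theta_2)\|\le\rho\|\theta_1-\theta_2\|$ ($\rho\in[0,1)$, $\theta^\star$ the unique fixed point of $Q$) and $\|P_e(\theta_1)-P_e(\theta_2)\|\le L\|\theta_1-\theta_2\|$ for all $e$ ($L\ge0$). Let $P(\cdot\mid\theta)$ be a probability kernel from $\mathcal{X}$ to $\mathcal{E}$, $\theta_0\in\mathcal{X}$, and let $e_t$ be drawn from $P(\cdot\mid\theta_t)$ independently of $\mathcal{F}_t:=\sigma(e_0,\dots,e_{t-1})$ given $\theta_t$, with $\theta_{t+1}=Q(P_{e_t}(\theta_t))$. Let $W_e:=\|P_e(\theta^\star)-\theta^\star\|$ and assume there are $0\le\sigma\le M$ with $\int W_e\,P(de\mid\theta)\le\sigma$ and $\operatorname{ess\,sup}_{e\sim P(\cdot\mid\theta)}W_e\le M$ for every $\theta\in\mathcal{X}$. Let $\gamma:=\rho L$ and $u_t:=\mathbb{E}\|\theta_t-\theta^\star\|$. Then: (i) if $\gamma<1$, $u_t\le\gamma^tu_0+\rho\sigma\frac{1-\gamma^t}{1-\gamma}$; (ii) $\mathbb{E}[\Omega(\theta_t;e_t)]\le2\gamma u_t+(1+\rho)\sigma$; (iii) if $\sigma=0$ and $\gamma<1$, then almost surely $\|\theta_t-\theta^\star\|\le\gamma^t\|\theta_0-\theta^\star\|$ and $\Omega(\theta_t;e_t)\le2\gamma^{t+1}\|\theta_0-\theta^\star\|$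 for all $t$.
   Context: The order-gap is $\Omega(\theta;e):=\|Q(P_e(\theta))-P_e(Q(\theta))\|$. *)

(* Defs.v *)
From HB Require Import structures.
From mathcomp Require Import all_boot all_order all_algebra.
From mathcomp Require Import all_classical all_reals all_analysis.
From mathcomp Require Import measurable_realfun.
Set Implicit Arguments. Unset Strict Implicit. Unset Printing Implicit Defensive.
Import Order.TTheory GRing.Theory Num.Theory.
Import numFieldNormedType.Exports.
Local Open Scope classical_set_scope.
Local Open Scope ring_scope.

Definition borel_set (X : topologicalType) : set (set X) := <<s @open X >>.

Definition prob_kernel_measurable (R : realType) (X : topologicalType)
  (dE : measure_display) (E : measurableType dE) (K : X -> probability E R) : Prop :=
  forall A : set E, measurable A ->
  forall B : set (\bar R), @measurable _ (\bar R) B -> borel_set ((fun th => K th A) @^-1` B).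

(* F_t := sigma(e_0, ..., e_{t-1}) (the trivial sigma-algebra for t = 0). *)
Definition filtration (dO dE : measure_display) (Omega : measurableType dO)
  (E : measurableType dE) (e : nat -> Omega -> E) (t : nat) : set (set Omega) :=
  <<s [set C | exists s, (s < t)%N /\ exists A : set E, measurable A /\ C = e s @^-1` A] >>.

Fixpoint traj (X Omega E : Type) (Q : X -> X) (P : E -> X -> X)
  (e : nat -> Omega -> E) (th0 : X) (t : nat) (w : Omega) : X :=
  match t with
  | 0 => th0
  | t'.+1 => Q (P (e t' w) (traj Q P e th0 t' w))
  end.

Definition order_gap (R : realType) (X : normedModType R) (E : Type)
  (Q : X -> X) (P : E -> X -> X) (th : X) (e : E) : R :=
  `| Q (P e th) - P e (Q th) |.

(* Main.v *)
Require Import Defs.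
From HB Require Import structures.
From mathcomp Require Import all_boot all_order all_algebra.
From mathcomp Require Import all_classical all_reals all_analysis.
From mathcomp Require Import measurable_realfun ess_sup_inf.
From mathcomp Require Import giry.
From mathcomp Require Import ring lra.
Import Order.TTheory GRing.Theory Num.Theory.
Import numFieldNormedType.Exports.
Local Open Scope classical_set_scope.
Local Open Scope ring_scope.
Section helpers.
Context (R : realType).

Lemma le_int_nm d (T : measurableType d) (mu : {measure set T -> \bar R})
  (f g : T -> \bar R) : (forall x, 0 <= f x)%E -> (forall x, f x <= g x)%E ->
  (\int[mu]_x f x <= \int[mu]_x g x)%E.
Proof.
move=> f0 fg.
have g0 : forall x, (0 <= g x)%E by move=> x; exact: le_trans (f0 x) (fg x).
rewrite !ge0_integralTE//; apply: ereal_sup_le => _ [h /= hf <-].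
exists h => //= x.
exact: le_trans (hf x) (fg x).
Qed.

Lemma borel_preimage d (T : measurableType d) (X : topologicalType) (f : T -> X) :
  (forall U, open U -> measurable (f @^-1` U)) ->
  forall U, borel_set U -> measurable (f @^-1` U).
Proof.
move=> hf U; apply: (@smallest_sub _ _ _ [set U | measurable (f @^-1` U)]) => //.
split => /=.
- by rewrite preimage_set0.
- by move=> A mA; rewrite setTD preimage_setC; apply: measurableC.
- by move=> F mF; rewrite preimage_bigcup; apply: bigcupT_measurable.
Qed.

Lemma meas_norm d (T : measurableType d) (X : normedModType R) (f : T -> X) (c : X) :
  (forall U, open U -> measurable (f @^-1` U)) ->
  measurable_fun setT (fun w => `|f w - c|).
Proof.
move=> hf; apply: (measurability _ (RGenOpens.measurableE R)).
move=> _ [_ [a [b ->] <-]]; rewrite setTI.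
have -> : (fun w => `|f w - c|) @^-1` `]a, b[%classic =
   f @^-1` ((fun x => `|x - c|) @^-1` `]a, b[%classic) by [].
apply: hf.
have cn : continuous (fun x : X => `|x - c|).
  move=> x; apply: (@continuous_comp _ _ _ (fun x => x - c) Num.norm).
    exact: (@cvgB _ _ _ _ _ _ _ _ _ cvg_id (cvg_cst c)).
  exact: norm_continuous.
exact: (continuousP _).1 cn _ (interval_open _ _).
Qed.

Lemma int_cst_prob d (Omega : measurableType d) (Prob : probability Omega R) (c : R) :
  (\int[Prob]_w c%:E = c%:E)%E.
Proof.
rewrite integral_cst//.
rewrite [X in (_ * X)%E](_ : _ = 1%E); [by rewrite mule1| exact: probability_setT].
Qed.

End helpers.

Section key.
Context (R : realType) (dE dO : measure_display) (E : measurableType dE)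
  (Omega : measurableType dO) (Prob : probability Omega R) (X : topologicalType)
  (K : X -> probability E R) (th : Omega -> X) (et : Omega -> E).
Hypotheses (hK : prob_kernel_measurable K)
  (th_m : forall U, open U -> measurable (th @^-1` U))
  (et_m : measurable_fun setT et)
  (hcond : forall A, measurable A ->
     Prob (et @^-1` A) = (\int[Prob]_w K (th w) A)%E).

Lemma key_int (W : E -> \bar R) : measurable_fun setT W -> (forall x, 0 <= W x)%E ->
  (\int[Prob]_w W (et w) = \int[Prob]_w \int[K (th w)]_x W x)%E.
Proof.
move=> mW W0.
have mf : measurable_fun setT (fun w => (K (th w) : giry E R)).
  apply: measurable_giry_codensity => // B mB _ Y mY; rewrite setTI.
  exact: (@borel_preimage _ _ _ th th_m _ (hK B mB Y mY)).
have -> : (\int[Prob]_w W (et w) = \int[pushforward Prob et]_y W y)%E.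
  by rewrite ge0_integral_pushforward//= preimage_setT.
rewrite (eq_measure_integral (giry_bind (Prob : giry Omega R) mf)); last first.
  move=> A mA _; rewrite /giry_bind /= giry_int_map//.
  - by rewrite /pushforward hcond.
  - exact: measurable_giry_ev.
exact: giry_int_bind.
Qed.
End key.
Section pointwise.
Context (R : realType) (X : normedModType R) (E : Type)
  (Q : X -> X) (P : E -> X -> X) (rho L : R) (thstar : X).
Hypotheses (rho0 : 0 <= rho) (L0 : 0 <= L)
  (hQ : forall th1 th2 : X, `| Q th1 - Q th2 | <= rho * `| th1 - th2 |)
  (hQs : Q thstar = thstar)
  (hP : forall (ee : E) (th1 th2 : X), `| P ee th1 - P ee th2 | <= L * `| th1 - th2 |).

Lemma pw_step ee th : `| Q (P ee th) - thstar |
  <= rho * L * `| th - thstar | + rho * `| P ee thstar - thstar |.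
Proof.
rewrite -{1}hQs; apply: le_trans (hQ _ _) _.
rewrite -mulrA -mulrDr ler_wpM2l//.
have -> : P ee th - thstar = (P ee th - P ee thstar) + (P ee thstar - thstar).
  by rewrite addrA subrK.
by apply: le_trans (ler_normD _ _) _; rewrite lerD2r.
Qed.

Lemma pw_gap ee th : order_gap Q P th ee
  <= 2 * (rho * L) * `| th - thstar | + (1 + rho) * `| P ee thstar - thstar |.
Proof.
rewrite /order_gap.
have -> : Q (P ee th) - P ee (Q th) = (Q (P ee th) - thstar) - (P ee (Q th) - thstar).
  by rewrite opprB addrA subrK.
apply: le_trans (ler_normB _ _) _.
have h2 : `| P ee (Q th) - thstar | <= rho * L * `| th - thstar | + `| P ee thstar - thstar |.
  have -> : P ee (Q th) - thstar = (P ee (Q th) - P ee thstar) + (P ee thstar - thstar).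
    by rewrite addrA subrK.
  apply: le_trans (ler_normD _ _) _; rewrite lerD2r.
  apply: le_trans (hP _ _ _) _; rewrite [rho * L]mulrC -mulrA ler_wpM2l//.
  by rewrite -{1}hQs; exact: hQ.
apply: le_trans (lerD (pw_step ee th) h2) _.
by rewrite le_eqVlt; apply/orP; left; apply/eqP; ring.
Qed.
End pointwise.

Theorem theorem4p22 (R : realType) (X : completeNormedModType R)
  (dE : measure_display) (E : measurableType dE)
  (dO : measure_display) (Omega : measurableType dO) (Prob : probability Omega R)
  (Q : X -> X) (P : E -> X -> X) (rho L : R) (thstar : X)
  (K : X -> probability E R) (th0 : X) (e : nat -> Omega -> E) (sigma M : R) :
  0 <= rho -> rho < 1 -> 0 <= L ->
  (forall th1 th2 : X, `| Q th1 - Q th2 | <= rho * `| th1 - th2 |) ->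
  Q thstar = thstar -> (forall th : X, Q th = th -> th = thstar) ->
  (forall (ee : E) (th1 th2 : X), `| P ee th1 - P ee th2 | <= L * `| th1 - th2 |) ->
  prob_kernel_measurable K ->
  (* the e_t are random variables and the iterates theta_t are (Borel) random elements of X *)
  (forall t, measurable_fun setT (e t)) ->
  (forall t (U : set X), open U -> measurable (traj Q P e th0 t @^-1` U)) ->
  (* e_t ~ P(. | theta_t), conditionally on F_t = sigma(e_0, ..., e_{t-1}) *)
  (forall t (A : set E) (B : set Omega), measurable A -> filtration e t B ->
     Prob (B `&` e t @^-1` A)
     = (\int[Prob]_(w in B) K (traj Q P e th0 t w) A)%E) ->
  (* W_e := norm of (P_e theta_star - theta_star) *)
  measurable_fun setT (fun ee : E => `| P ee thstar - thstar |) ->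
  0 <= sigma -> sigma <= M ->
  (forall th : X, (\int[K th]_ee (`| P ee thstar - thstar |)%:E <= sigma%:E)%E) ->
  (forall th : X, (ess_sup (K th) (fun ee : E => (`| P ee thstar - thstar |)%:E)
                    <= M%:E)%E) ->
  let gamma := rho * L in
  let u := fun t : nat => (\int[Prob]_w (`| traj Q P e th0 t w - thstar |)%:E)%E in
  [/\ (* (i) *)
      (gamma < 1 -> forall t : nat,
         (u t <= (gamma ^+ t)%:E * u 0%N
                 + (rho * sigma * ((1 - gamma ^+ t) / (1 - gamma)))%:E)%E),
      (* (ii) *)
      (forall t : nat,
         (\int[Prob]_w (order_gap Q P (traj Q P e th0 t w) (e t w))%:E
          <= (2 * gamma)%:E * u t + ((1 + rho) * sigma)%:E)%E) &
      (* (iii) *)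
      (sigma = 0 -> gamma < 1 ->
         {ae Prob, forall w, forall t : nat,
            `| traj Q P e th0 t w - thstar | <= gamma ^+ t * `| th0 - thstar |
            /\ order_gap Q P (traj Q P e th0 t w) (e t w)
               <= 2 * gamma ^+ t.+1 * `| th0 - thstar |})].
Proof.
move=> rho0 rho1 L0 hQ hQs _ hP hK he_m htraj hcond mW sig0 _ hint _ gamma u.
set W := fun ee : E => `| P ee thstar - thstar |.
set th := traj Q P e th0.
have gamma0 : 0 <= gamma by rewrite /gamma mulr_ge0.
have md : forall t, measurable_fun setT (fun w => `| th t w - thstar |).
  by move=> t; apply: meas_norm; exact: htraj.
have mWe : forall t, measurable_fun setT (fun w => W (e t w)).
  by move=> t; exact: measurableT_comp mW (he_m t).
have EW : forall t, (\int[Prob]_w (W (e t w))%:E <= sigma%:E)%E.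
  move=> t.
  have hc : forall A, measurable A ->
      Prob (e t @^-1` A) = (\int[Prob]_w K (th t w) A)%E.
    move=> A mA; have := hcond t A setT mA.
    rewrite setTI; apply; rewrite /filtration.
    set G := (X in <<s X >>).
    have [h0 hC _] := @smallest_sigma_algebra _ [set: Omega] G.
    by have := hC _ h0; rewrite setD0.
  rewrite (@key_int R dE dO E Omega Prob X K (th t) (e t) hK (htraj t) (he_m t) hc
     (fun ee => (W ee)%:E)); last 2 first.
  - exact/measurable_EFinP.
  - by move=> x; rewrite lee_fin /W.
  apply: le_trans (@le_int_nm _ _ _ Prob _ (fun _ => sigma%:E) _ _) _.
  - by move=> w; apply: integral_ge0 => x _; rewrite lee_fin /W.
  - by move=> w; exact: hint.
  rewrite integral_cst//.
  rewrite -[leRHS]mule1; apply: lee_wpmul2l; first by rewrite lee_fin.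
  exact: probability_le1.
have step : forall t w, `|th t.+1 w - thstar|
    <= gamma * `|th t w - thstar| + rho * W (e t w).
  by move=> t w; exact: pw_step.
have gap : forall t w, order_gap Q P (th t w) (e t w)
    <= 2 * gamma * `|th t w - thstar| + (1 + rho) * W (e t w).
  by move=> t w; exact: pw_gap.
have iint : forall (a b : R) t, 0 <= a -> 0 <= b ->
    (\int[Prob]_w (a * `|th t w - thstar| + b * W (e t w))%:E
     = a%:E * u t + b%:E * \int[Prob]_w (W (e t w))%:E)%E.
  move=> a b t a0 b0.
  under eq_integral do rewrite EFinD.
  rewrite ge0_integralD//; last 4 first.
  - by move=> w _; rewrite lee_fin mulr_ge0.
  - by apply/measurable_EFinP; apply: measurable_funM => //; exact: md.
  - by move=> w _; rewrite lee_fin mulr_ge0 // /W.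
  - by apply/measurable_EFinP; apply: measurable_funM => //; exact: mWe.
  under eq_integral do rewrite EFinM.
  rewrite ge0_integralZl//; last exact/measurable_EFinP/md.
  under [X in (_ + X)%E]eq_integral do rewrite EFinM.
  rewrite ge0_integralZl//.
  - exact/measurable_EFinP/mWe.
  - by move=> w _; rewrite lee_fin /W.
have one : forall t, (u t.+1 <= gamma%:E * u t + (rho * sigma)%:E)%E.
  move=> t; apply: le_trans (_ : _ <= \int[Prob]_w
     (gamma * `|th t w - thstar| + rho * W (e t w))%:E)%E _.
    apply: le_int_nm => w; first by rewrite lee_fin.
    by rewrite lee_fin; exact: step.
  rewrite iint //; apply: leeD2l; rewrite EFinM.
  apply: lee_wpmul2l; first by rewrite lee_fin.
  exact: EW.
have u0 : u 0%N = (`|th0 - thstar|)%:E by rewrite /u /=; exact: int_cst_prob.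
split.
- move=> g1 t.
  have g1' : 1 - gamma != 0 by rewrite subr_eq0 eq_sym lt_eqF.
  rewrite u0; elim: t => [|t IH].
    by rewrite u0 expr0 subrr mul0r mulr0 mul1e adde0.
  apply: le_trans (one t) _.
  apply: le_trans (leeD2r _ (lee_wpmul2l _ IH)) _; first by rewrite lee_fin.
  rewrite -!EFinM -!EFinD lee_fin le_eqVlt; apply/orP; left; apply/eqP.
  rewrite exprS; field.
  exact: g1'.
- move=> t; apply: le_trans (_ : _ <= \int[Prob]_w
     (2 * gamma * `|th t w - thstar| + (1 + rho) * W (e t w))%:E)%E _.
    apply: le_int_nm => w; first by rewrite lee_fin /order_gap.
    by rewrite lee_fin; exact: gap.
  rewrite iint ?mulr_ge0 ?addr_ge0 //; apply: leeD2l; rewrite EFinM.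
  apply: lee_wpmul2l; first by rewrite lee_fin addr_ge0.
  exact: EW.
- move=> s0 g1.
  have ae0 : forall t, ae_eq Prob setT (fun w => (W (e t w))%:E) (cst 0%E).
    move=> t; apply/(ae_eq_integral_abs _ measurableT _).1.
      exact/measurable_EFinP/mWe.
    rewrite (eq_integral (fun x => (W (e t x))%:E)); last first.
      by move=> x _; rewrite gee0_abs // lee_fin /W.
    apply/eqP; rewrite eq_le integral_ge0 ?andbT; last by move=> w _; rewrite lee_fin /W.
    by have := EW t; rewrite s0.
  have := ae_foralln ae0; apply: filterS => w Hw.
  have W0 : forall t, W (e t w) = 0.
    by move=> t; have /= := Hw t Logic.I => -[].
  have dt : forall t, `|th t w - thstar| <= gamma ^+ t * `|th0 - thstar|.
    elim => [|t IH]; first by rewrite expr0 mul1r.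
    apply: le_trans (step t w) _; rewrite W0 mulr0 addr0 exprS -mulrA ler_wpM2l//.
  move=> t; split; first exact: dt.
  apply: le_trans (gap t w) _; rewrite W0 mulr0 addr0 exprS -!mulrA.
  apply: ler_wpM2l => //; apply: ler_wpM2l => //; apply: ler_wpM2l => //.
Qed.
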